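(* Let $\mathcal M=(M,<,+,0,\ldots)$ be a definably complete locally o-minimal expansion of an ordered abelian group. Let $C\subseteq M^m$ and $P\subseteq M^n$ be definable sets with $C$ closed and bounded, and let $f:C\times P\to M$ be a definable function. Then $f$ is equi-continuous with respect to $P$ if and only if it is uniformly equi-continuous with respect to $P$.
   Context: Definable = with parameters. Definably complete: every definable subset of $M$ has sup and inf in $M\cup\{\pm\infty\}$. Locally o-minimal: for every definable $X\subseteq M$ and $a\in M$ there is an open interval $I\ni a$ with $X\cap I$ a finite union of points and open intervals. $|x|=\max_i|x_i|$. $f$ is equi-continuous w.r.t. $P$ if $\forall\varepsilon>0\ \forall x\in C\ \exists\delta>0\ \forall p\in P\ \forall x'\in C$: $|x-x'|<\delta\Rightarrow|f(x,p)-f(x',p)|<\varepsilon$. It is uniformly equi-continuous w.r.t. $P$ if $\forall\varepsilon>0\ \exists\delta>0\ \forall p\in P\ \forall x,x'\in C$: $|x-x'|<\delta\Rightarrow|f(x,p)-f(x',p)|<\varepsilon$. *)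

(* Defs.v *)
From HB Require Import structures.
From mathcomp Require Import all_boot all_order all_algebra.
Set Implicit Arguments. Unset Strict Implicit. Unset Printing Implicit Defensive.
Import Order.TTheory GRing.Theory Num.Theory.
Local Open Scope ring_scope.

Section Defs.
Variable M : porderZmodType.

Definition ordered_abelian_group : Prop :=
  (forall x y : M, (x <= y) || (y <= x)) /\
  (forall x y z : M, x < y -> x + z < y + z).

Definition pt n := 'I_n -> M.
Definition catf m n (x : pt m) (y : pt n) : pt (m + n) :=
  fun i => match split i with inl j => x j | inr k => y k end.

(* A first-order structure on M (van den Dries, Tame topology, Ch.1):
   Def n A  means  A is a definable (with parameters) subset of M^n *)
Definition is_structure (Def : forall n, (pt n -> Prop) -> Prop) : Prop :=
  (forall n, Def n (fun _ => False)) /\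
  [/\ (forall n A, Def n A -> Def n (fun x => ~ A x)),
      (forall n A B, Def n A -> Def n B -> Def n (fun x => A x \/ B x)),
      (forall m n (A : pt m -> Prop) (B : pt n -> Prop), Def m A -> Def n B ->
          Def (m + n) (fun z => A (fun i => z (lshift n i)) /\
                                B (fun j => z (rshift m j)))),
      (forall n (i j : 'I_n), Def n (fun x => x i = x j)) &
      (forall m n (A : pt (m + n) -> Prop), Def (m + n) A ->
          Def m (fun x => exists y : pt n, A (catf x y)))].

(* an expansion of (M,<,+,0) in which all parameters are allowed *)
Definition is_expansion (Def : forall n, (pt n -> Prop) -> Prop) : Prop :=
  [/\ is_structure Def,
      Def 2 (fun x => x ord0 < x (lift ord0 ord0)),
      Def 3 (fun x => x ord0 + x (lift ord0 ord0) = x ord_max) &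
      (forall a : M, Def 1 (fun x => x ord0 = a))].

Definition is_ub (X : M -> Prop) (b : M) := forall x, X x -> x <= b.
Definition is_lb (X : M -> Prop) (b : M) := forall x, X x -> b <= x.

(* sup/inf exist in M \cup {+-oo}: nonempty bounded definable sets have
   a sup and inf in M (empty / unbounded sets have sup,inf = +-oo) *)
Definition definably_complete (Def : forall n, (pt n -> Prop) -> Prop) : Prop :=
  forall X : pt 1 -> Prop, Def 1 X ->
    let X1 := fun a : M => X (fun _ => a) in
    ((exists a, X1 a) -> (exists b, is_ub X1 b) ->
       exists s, is_ub X1 s /\ forall b, is_ub X1 b -> s <= b) /\
    ((exists a, X1 a) -> (exists b, is_lb X1 b) ->
       exists s, is_lb X1 s /\ forall b, is_lb X1 b -> b <= s).

Definition oint (b c : M) := fun x : M => b < x /\ x < c.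

Definition locally_o_minimal (Def : forall n, (pt n -> Prop) -> Prop) : Prop :=
  forall X : pt 1 -> Prop, Def 1 X -> forall a : M,
    exists b c, b < a /\ a < c /\
      exists (pts : seq M) (ivs : seq (M * M)),
        forall x, (X (fun _ => x) /\ oint b c x) <->
          (x \in pts \/ exists2 uv, uv \in ivs & oint uv.1 uv.2 x).

Definition absM (a : M) : M := Order.max a (- a).
Definition nrm n (x : pt n) : M := \big[Order.max/0]_(i < n) absM (x i).
Definition dist n (x y : pt n) : M := nrm (fun i => x i - y i).

Definition closed_set n (C : pt n -> Prop) : Prop :=
  forall x : pt n, (forall e : M, 0 < e -> exists y, C y /\ dist x y < e) -> C x.
Definition bounded_set n (C : pt n -> Prop) : Prop :=
  exists B : M, forall x, C x -> nrm x <= B.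

Definition definable_fun (Def : forall n, (pt n -> Prop) -> Prop) m n
  (C : pt m -> Prop) (P : pt n -> Prop) (f : pt m -> pt n -> M) : Prop :=
  Def (m + n + 1) (fun z => exists x p, C x /\ P p /\
        z = catf (catf x p) (fun _ : 'I_1 => f x p)).

Definition equicontinuous m n (C : pt m -> Prop) (P : pt n -> Prop)
  (f : pt m -> pt n -> M) : Prop :=
  forall e : M, 0 < e -> forall x, C x -> exists d : M, 0 < d /\
    forall p x', P p -> C x' -> dist x x' < d -> absM (f x p - f x' p) < e.

Definition unif_equicontinuous m n (C : pt m -> Prop) (P : pt n -> Prop)
  (f : pt m -> pt n -> M) : Prop :=
  forall e : M, 0 < e -> exists d : M, 0 < d /\
    forall p x x', P p -> C x -> C x' -> dist x x' < d -> absM (f x p - f x' p) < e.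

End Defs.

(* Main.v *)
Require Import Defs.
From HB Require Import structures.
From mathcomp Require Import all_boot all_order all_algebra.
From Stdlib Require Import Classical FunctionalExtensionality PropExtensionality Setoid.
Set Implicit Arguments. Unset Strict Implicit. Unset Printing Implicit Defensive.
Import Order.TTheory GRing.Theory Num.Theory.
Local Open Scope ring_scope.


Section Ord.
Variable M : porderZmodType.
Hypothesis HM : ordered_abelian_group M.
Implicit Types x y z a b c d e : M.

Lemma tot x y : (x <= y) \/ (y <= x).
Proof. by case/orP: (HM.1 x y); [left|right]. Qed.

Lemma ltD x y z : x < y -> x + z < y + z.
Proof. exact: HM.2. Qed.
Lemma ltDl x y z : x < y -> z + x < z + y.
Proof. by move=> h; rewrite ![z + _]addrC; apply: ltD. Qed.
Lemma leD x y z : x <= y -> x + z <= y + z.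
Proof. by rewrite le_eqVlt => /orP[/eqP->//|h]; apply/ltW/ltD. Qed.
Lemma leDl x y z : x <= y -> z + x <= z + y.
Proof. by move=> h; rewrite ![z + _]addrC; apply: leD. Qed.
Lemma ltD2 a b c d : a < b -> c < d -> a + c < b + d.
Proof. move=> h1 h2; apply: (lt_trans (ltD c h1)); exact: ltDl. Qed.
Lemma ltleD a b c d : a < b -> c <= d -> a + c < b + d.
Proof. move=> h1 h2; apply: (lt_le_trans (ltD c h1)); exact: leDl. Qed.
Lemma leD2 a b c d : a <= b -> c <= d -> a + c <= b + d.
Proof. move=> h1 h2; apply: (le_trans (leD c h1)); exact: leDl. Qed.

Lemma ltD_cancel x y z : x + z < y + z -> x < y.
Proof. by move=> /(ltD (- z)); rewrite !addrK. Qed.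
Lemma leD_cancel x y z : x + z <= y + z -> x <= y.
Proof. by move=> /(leD (- z)); rewrite !addrK. Qed.

Lemma lt_subE x y e : (x - y < e) <-> (x < e + y).
Proof.
split=> h; first by have := ltD y h; rewrite subrK.
by apply: (@ltD_cancel _ _ y); rewrite subrK.
Qed.

Lemma lt_max a b d : Order.max a b < d <-> a < d /\ b < d.
Proof.
rewrite /Order.max; case: ifP => hab.
  by split=> [h|[]//]; split=> //; apply: lt_trans h.
split=> [h|[]//]; split=> //; case: (tot a b) => h2.
  by move: h2; rewrite le_eqVlt hab orbF => /eqP<-.
exact: le_lt_trans h.
Qed.

Lemma absM_lt a e : absM a < e <-> a < e /\ - a < e.
Proof. exact: lt_max. Qed.

Lemma bigmax_lt (I : eqType) (s : seq I) (F : I -> M) d :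
  \big[Order.max/0]_(i <- s) F i < d <-> 0 < d /\ forall i, i \in s -> F i < d.
Proof.
elim: s => [|a s IH]; first by rewrite big_nil; split=> [h|[]//]; split.
rewrite big_cons lt_max IH; split.
  move=> [h1 [h2 h3]]; split=> // i; rewrite inE => /orP[/eqP->//|]; exact: h3.
move=> [h1 h2]; split; first by apply: h2; rewrite inE eqxx.
by split=> // i hi; apply: h2; rewrite inE hi orbT.
Qed.

Lemma nrm_lt n (x : pt M n) d : nrm x < d <-> 0 < d /\ forall i, absM (x i) < d.
Proof.
rewrite /nrm bigmax_lt; split=> [][h1 h2]; split=> // i; first exact: h2 (mem_index_enum _).
Qed.

Definition ltd n (x y : pt M n) d := 0 < d /\ forall i, x i < d + y i /\ y i < d + x i.

Lemma dist_lt n (x y : pt M n) d : dist x y < d <-> ltd x y d.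
Proof.
rewrite /dist nrm_lt /ltd; split=> [][h1 h2]; split=> // i.
  by have /absM_lt[] := h2 i; rewrite opprB !lt_subE.
by apply/absM_lt; rewrite opprB !lt_subE.
Qed.

End Ord.


Section Blocks.
Variable M : porderZmodType.
Definition lftB k n (w : pt M (k + n)) : pt M k := fun i => w (lshift n i).
Definition rgtB k n (w : pt M (k + n)) : pt M n := fun j => w (rshift k j).
Definition one (a : M) : pt M 1 := fun _ => a.
Definition sc (x : pt M 1) : M := x ord0.

Lemma catf_l k n (x : pt M k) (y : pt M n) i : catf x y (lshift n i) = x i.
Proof. by rewrite /catf -[lshift n i]/(unsplit (inl i)) unsplitK. Qed.
Lemma catf_r k n (x : pt M k) (y : pt M n) i : catf x y (rshift k i) = y i.
Proof. by rewrite /catf -[rshift k i]/(unsplit (inr i)) unsplitK. Qed.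
Lemma lftB_cat k n (x : pt M k) (y : pt M n) : lftB (catf x y) = x.
Proof. by apply: functional_extensionality => i; rewrite /lftB catf_l. Qed.
Lemma rgtB_cat k n (x : pt M k) (y : pt M n) : rgtB (catf x y) = y.
Proof. by apply: functional_extensionality => i; rewrite /rgtB catf_r. Qed.
Lemma cat_lr k n (w : pt M (k + n)) : catf (lftB w) (rgtB w) = w.
Proof.
apply: functional_extensionality => i; rewrite /catf /lftB /rgtB.
by case E: (split i) => [j|j]; rewrite -[in RHS](splitK i) E.
Qed.
Lemma sc_one a : sc (one a) = a. Proof. by []. Qed.
Lemma one_sc (x : pt M 1) : one (sc x) = x.
Proof. by apply: functional_extensionality => i; rewrite /one /sc (ord1 i). Qed.

Definition coord k n (Phi : pt M k -> pt M n) :=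
  exists s : 'I_n -> 'I_k, forall z, Phi z = (fun i => z (s i)).
Lemma coord_id k : coord (fun z : pt M k => z).
Proof. by exists id. Qed.
Lemma coord_lftB k a b (Phi : pt M k -> pt M (a + b)) :
  coord Phi -> coord (fun z => lftB (Phi z)).
Proof. by case=> s hs; exists (fun i => s (lshift b i)) => z; rewrite hs. Qed.
Lemma coord_rgtB k a b (Phi : pt M k -> pt M (a + b)) :
  coord Phi -> coord (fun z => rgtB (Phi z)).
Proof. by case=> s hs; exists (fun i => s (rshift a i)) => z; rewrite hs. Qed.
Lemma coord_cat k a b (P1 : pt M k -> pt M a) (P2 : pt M k -> pt M b) :
  coord P1 -> coord P2 -> coord (fun z => catf (P1 z) (P2 z)).
Proof.
case=> s1 h1 [s2 h2].
exists (fun i => match split i with inl j => s1 j | inr j => s2 j end) => z.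
apply: functional_extensionality => i; rewrite /catf h1 h2.
by case: (split i).
Qed.
Lemma coord_lftB0 a b : coord (@lftB a b).
Proof. exact: (@coord_lftB _ a b (fun z => z) (coord_id _)). Qed.
Lemma coord_rgtB0 a b : coord (@rgtB a b).
Proof. exact: (@coord_rgtB _ a b (fun z => z) (coord_id _)). Qed.
End Blocks.

Ltac coordt := repeat first [ apply: coord_cat | apply: coord_lftB0 | apply: coord_rgtB0 | apply: coord_lftB | apply: coord_rgtB | apply: coord_id ].
Ltac simpc := rewrite ?lftB_cat ?rgtB_cat ?sc_one.

Section Dfn.
Variable M : porderZmodType.
Variable Def : forall n, (pt M n -> Prop) -> Prop.
Hypothesis Hexp : is_expansion Def.

Lemma Def_ext k (A B : pt M k -> Prop) : Def A -> (forall z, A z <-> B z) -> Def B.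
Proof.
move=> hA hAB; suff <- : A = B by [].
by apply: functional_extensionality => z; apply: propositional_extensionality.
Qed.

Let Hs : is_structure Def := let: And4 h _ _ _ := Hexp in h.
Lemma Def_False k : Def (fun _ : pt M k => False).
Proof. by case: Hs => h _. Qed.
Lemma Def_not k (A : pt M k -> Prop) : Def A -> Def (fun z => ~ A z).
Proof. by case: Hs => _ [h _ _ _ _]; apply: h. Qed.
Lemma Def_or k (A B : pt M k -> Prop) : Def A -> Def B -> Def (fun z => A z \/ B z).
Proof. by case: Hs => _ [_ h _ _ _]; apply: h. Qed.
Lemma Def_prod a b (A : pt M a -> Prop) (B : pt M b -> Prop) : Def A -> Def B ->
  Def (fun z : pt M (a + b) => A (lftB z) /\ B (rgtB z)).
Proof. by case: Hs => _ [_ _ h _ _]; apply: h. Qed.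
Lemma Def_diag k (i j : 'I_k) : Def (fun z : pt M k => z i = z j).
Proof. by case: Hs => _ [_ _ _ h _]; apply: h. Qed.
Lemma Def_exB k n (A : pt M (k + n) -> Prop) : Def A ->
  Def (fun z => exists y : pt M n, A (catf z y)).
Proof. by case: Hs => _ [_ _ _ _ h]; apply: h. Qed.

Lemma Def_True k : Def (fun _ : pt M k => True).
Proof. by apply: Def_ext (Def_not (@Def_False k)) _ => z; tauto. Qed.
Lemma Def_and k (A B : pt M k -> Prop) : Def A -> Def B -> Def (fun z => A z /\ B z).
Proof.
move=> hA hB; apply: Def_ext (Def_not (Def_or (Def_not hA) (Def_not hB))) _ => z.
by split=> [h|[h1 h2] [|]//]; split; apply: NNPP => h'; apply: h; [left|right].
Qed.
Lemma Def_imp k (A B : pt M k -> Prop) : Def A -> Def B -> Def (fun z => A z -> B z).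
Proof.
move=> hA hB; apply: Def_ext (Def_or (Def_not hA) hB) _ => z.
by split=> [[h|h] h'//|h]; case: (classic (A z)) => h'; [right; apply: h|left].
Qed.
Lemma Def_iff k (A B : pt M k -> Prop) : Def A -> Def B -> Def (fun z => A z <-> B z).
Proof.
move=> hA hB; apply: Def_ext (Def_and (Def_imp hA hB) (Def_imp hB hA)) _ => z.
by split=> [[]|[]]; split.
Qed.
Lemma Def_allB k n (A : pt M (k + n) -> Prop) : Def A ->
  Def (fun z => forall y : pt M n, A (catf z y)).
Proof.
move=> hA; apply: Def_ext (Def_not (Def_exB (Def_not hA))) _ => z.
split=> [h y|h [y hy]//]; apply: NNPP => h'; apply: h; by exists y.
Qed.
Lemma Def_ex1 k (A : pt M (k + 1) -> Prop) : Def A ->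
  Def (fun z => exists a : M, A (catf z (one a))).
Proof.
move=> hA; apply: Def_ext (Def_exB hA) _ => z.
by split=> [[y hy]|[a ha]]; [exists (sc y); rewrite one_sc | exists (one a)].
Qed.
Lemma Def_all1 k (A : pt M (k + 1) -> Prop) : Def A ->
  Def (fun z => forall a : M, A (catf z (one a))).
Proof.
move=> hA; apply: Def_ext (Def_allB hA) _ => z.
by split=> h y //; rewrite -(one_sc y).
Qed.

Lemma Def_allfin (I : finType) k (Q : I -> pt M k -> Prop) :
  (forall i, Def (Q i)) -> Def (fun z => forall i, Q i z).
Proof.
move=> hQ.
suff H : forall s : seq I, Def (fun z => forall i, i \in s -> Q i z).
  by apply: Def_ext (H (enum I)) _ => z; split=> h i // ; apply: h; rewrite mem_enum.
elim=> [|a s IH]; first by apply: Def_ext (@Def_True k) _.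
apply: Def_ext (Def_and (hQ a) IH) _ => z; split.
  by move=> [h1 h2] i; rewrite inE => /orP[/eqP->//|]; apply: h2.
by move=> h; split=> [|i hi]; apply: h; rewrite inE ?eqxx ?hi ?orbT.
Qed.

Lemma Def_pull k n (s : 'I_n -> 'I_k) (A : pt M n -> Prop) : Def A ->
  Def (fun z => A (fun i => z (s i))).
Proof.
move=> hA.
have hW : Def (fun w : pt M (k + n) =>
   (True /\ A (rgtB w)) /\ forall j, w (rshift k j) = w (lshift n (s j))).
  apply: Def_and; first exact: (Def_prod (@Def_True k) hA).
  by apply: Def_allfin => j; apply: Def_diag.
apply: Def_ext (Def_exB hW) _ => z; split.
  move=> [y [[_ hy] hj]]; move: hy; rewrite rgtB_cat.
  suff -> : y = (fun i => z (s i)) by [].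
  by apply: functional_extensionality => i; have := hj i; rewrite catf_l catf_r.
move=> h; exists (fun i => z (s i)); rewrite rgtB_cat; split=> // j.
by rewrite catf_l catf_r.
Qed.

Lemma Def_pullc k n (Phi : pt M k -> pt M n) (A : pt M n -> Prop) : coord Phi -> Def A ->
  Def (fun z => A (Phi z)).
Proof.
case=> s hs hA; apply: Def_ext (Def_pull s hA) _ => z; by rewrite hs.
Qed.

Lemma Def_subst k (A : pt M (k + 1) -> Prop) (c : M) : Def A ->
  Def (fun z => A (catf z (one c))).
Proof.
case: Hexp => _ _ _ hc hA.
have h2 : Def (fun w : pt M (k + 1) => sc (rgtB w) = c).
  apply: Def_ext (Def_pullc (Phi := fun w : pt M (k+1) => rgtB w) _ (hc c)) _.
    by coordt.
  by move=> w.
apply: Def_ext (Def_ex1 (Def_and hA h2)) _ => z; split.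
  by move=> [a]; rewrite rgtB_cat sc_one => -[h <-].
by move=> h; exists c; rewrite rgtB_cat sc_one.
Qed.

Definition pr (a b : M) : pt M (1 + 1) := catf (one a) (one b).

Lemma Def_lt : Def (fun w : pt M (1 + 1) => sc (lftB w) < sc (rgtB w)).
Proof.
case: Hexp => _ h _ _; apply: Def_ext h _ => w.
rewrite /sc /lftB /rgtB; have -> : lshift 1 (@ord0 0) = ord0 by apply: val_inj.
by have -> : rshift 1 (@ord0 0) = lift ord0 ord0 by apply: val_inj.
Qed.
Lemma Def_eq : Def (fun w : pt M (1 + 1) => sc (lftB w) = sc (rgtB w)).
Proof. exact: Def_diag. Qed.
Lemma Def_le : Def (fun w : pt M (1 + 1) => sc (lftB w) <= sc (rgtB w)).
Proof.
apply: Def_ext (Def_or Def_eq Def_lt) _ => w.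
by rewrite le_eqVlt; split=> [[->|->]|/orP[/eqP|]]; rewrite ?eqxx ?orbT; auto.
Qed.
Lemma Def_sum : Def (fun w : pt M ((1 + 1) + 1) =>
   sc (lftB (lftB w)) + sc (rgtB (lftB w)) = sc (rgtB w)).
Proof.
case: Hexp => _ _ h _; apply: Def_ext h _ => w.
rewrite /sc /lftB /rgtB.
have -> : lshift 1 (lshift 1 (@ord0 0)) = ord0 by apply: val_inj.
have -> : lshift 1 (rshift 1 (@ord0 0)) = lift ord0 ord0 by apply: val_inj.
by have -> : rshift (1+1) (@ord0 0) = ord_max by apply: val_inj.
Qed.
Lemma Def_pullE k n (Phi : pt M k -> pt M n) (A : pt M n -> Prop) (B : pt M k -> Prop) :
  Def A -> coord Phi -> (forall z, A (Phi z) <-> B z) -> Def B.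
Proof. by move=> hA hP hE; apply: Def_ext (Def_pullc hP hA) hE. Qed.

Lemma Def_ltsum : Def (fun w : pt M ((1 + 1) + 1) =>
   sc (lftB (lftB w)) < sc (rgtB (lftB w)) + sc (rgtB w)).
Proof.
have h1 : Def (fun w : pt M (((1 + 1) + 1) + 1) =>
  sc (rgtB (lftB (lftB w))) + sc (rgtB (lftB w)) = sc (rgtB w)).
  apply: (Def_pullE (Phi := fun w => catf (catf (rgtB (lftB (lftB w))) (rgtB (lftB w))) (rgtB w)) Def_sum).
  by coordt. move=> w; simpc. tauto.
have h2 : Def (fun w : pt M (((1 + 1) + 1) + 1) =>
  sc (lftB (lftB (lftB w))) < sc (rgtB w)).
  apply: (Def_pullE (Phi := fun w => catf (lftB (lftB (lftB w))) (rgtB w)) Def_lt).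
  by coordt. move=> w; simpc. tauto.
apply: Def_ext (Def_ex1 (Def_and h1 h2)) _ => w; split=> [[a]|h]; simpc.
  by move=> [<-].
by exists (sc (rgtB (lftB w)) + sc (rgtB w)); simpc.
Qed.
End Dfn.

Ltac simps := repeat (first [setoid_rewrite lftB_cat | setoid_rewrite rgtB_cat]); rewrite /sc /one.


Section Rel.
Variable M : porderZmodType.
Variable Def : forall n, (pt M n -> Prop) -> Prop.
Hypothesis Hexp : is_expansion Def.

Lemma Def_rel2 (R : M -> M -> Prop) k (P1 P2 : pt M k -> pt M 1) :
  Def (fun w : pt M (1 + 1) => R (sc (lftB w)) (sc (rgtB w))) -> coord P1 -> coord P2 ->
  Def (fun z => R (sc (P1 z)) (sc (P2 z))).
Proof.
move=> hR h1 h2; apply: (Def_pullE Hexp (Phi := fun z => catf (P1 z) (P2 z)) hR).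
  exact: coord_cat. by move=> z; simpc.
Qed.

Lemma Def_rel2cl (R : M -> M -> Prop) k (P : pt M k -> pt M 1) c :
  Def (fun w : pt M (1 + 1) => R (sc (lftB w)) (sc (rgtB w))) -> coord P ->
  Def (fun z => R c (sc (P z))).
Proof.
move=> hR h; have := Def_rel2 (P1 := fun w : pt M (k + 1) => rgtB w) (P2 := fun w => P (lftB w)) hR.
move=> /(_ (@coord_rgtB0 M _ _)) H.
have hc : coord (fun w : pt M (k + 1) => P (lftB w)).
  by case: h => s hs; exists (fun i => lshift 1 (s i)) => z; rewrite hs.
have {H} := Def_subst Hexp c (H hc).
by move=> H; apply: Def_ext H _ => z; simpc.
Qed.

Lemma Def_rel2cr (R : M -> M -> Prop) k (P : pt M k -> pt M 1) c :
  Def (fun w : pt M (1 + 1) => R (sc (lftB w)) (sc (rgtB w))) -> coord P ->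
  Def (fun z => R (sc (P z)) c).
Proof.
move=> hR h; have := Def_rel2 (P2 := fun w : pt M (k + 1) => rgtB w) (P1 := fun w => P (lftB w)) hR.
move=> /(_ _ (@coord_rgtB0 M _ _)) H.
have hc : coord (fun w : pt M (k + 1) => P (lftB w)).
  by case: h => s hs; exists (fun i => lshift 1 (s i)) => z; rewrite hs.
have {H} := Def_subst Hexp c (H hc).
by move=> H; apply: Def_ext H _ => z; simpc.
Qed.
Lemma Dle k (P1 P2 : pt M k -> pt M 1) : coord P1 -> coord P2 ->
  Def (fun z => sc (P1 z) <= sc (P2 z)).
Proof. exact: (Def_rel2 (R := fun a b => a <= b) (Def_le Hexp)). Qed.
Lemma Dlt k (P1 P2 : pt M k -> pt M 1) : coord P1 -> coord P2 ->
  Def (fun z => sc (P1 z) < sc (P2 z)).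
Proof. exact: (Def_rel2 (R := fun a b => a < b) (Def_lt Hexp)). Qed.
Lemma Dcle k c (P : pt M k -> pt M 1) : coord P -> Def (fun z => c <= sc (P z)).
Proof. exact: (Def_rel2cl (R := fun a b => a <= b) _ (Def_le Hexp)). Qed.
Lemma Dlec k c (P : pt M k -> pt M 1) : coord P -> Def (fun z => sc (P z) <= c).
Proof. exact: (Def_rel2cr (R := fun a b => a <= b) _ (Def_le Hexp)). Qed.
Lemma Dclt k c (P : pt M k -> pt M 1) : coord P -> Def (fun z => c < sc (P z)).
Proof. exact: (Def_rel2cl (R := fun a b => a < b) _ (Def_lt Hexp)). Qed.
Lemma Dltc k c (P : pt M k -> pt M 1) : coord P -> Def (fun z => sc (P z) < c).
Proof. exact: (Def_rel2cr (R := fun a b => a < b) _ (Def_lt Hexp)). Qed.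
Lemma Dltsum k (P1 P2 P3 : pt M k -> pt M 1) : coord P1 -> coord P2 -> coord P3 ->
  Def (fun z => sc (P1 z) < sc (P2 z) + sc (P3 z)).
Proof.
move=> h1 h2 h3; apply: (Def_pullE Hexp (Phi := fun z => catf (catf (P1 z) (P2 z)) (P3 z)) (Def_ltsum Hexp)).
  by apply: coord_cat => //; apply: coord_cat.
by move=> z; simpc.
Qed.
End Rel.



Section Int.
Variable M : porderZmodType.
Hypothesis HM : ordered_abelian_group M.
Variable Def : forall n, (pt M n -> Prop) -> Prop.
Hypothesis Hexp : is_expansion Def.
Hypothesis Hdc : definably_complete Def.
Hypothesis Hden : forall r : M, 0 < r -> exists a, 0 < a /\ a < r.

Lemma pmin (a b : M) : 0 < a -> 0 < b -> exists c, [/\ 0 < c, c <= a & c <= b].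
Proof.
move=> ha hb; case: (tot HM a b) => h; first by exists a.
by exists b.
Qed.

Lemma Int (B : M) (G1 : M -> M -> Prop) : 0 <= B ->
  Def (fun w : pt M (1 + 1) => G1 (sc (lftB w)) (sc (rgtB w))) ->
  (forall t r r', 0 < r' -> r' <= r -> G1 t r -> G1 t r') ->
  (forall t, -B <= t -> t <= B -> exists s, 0 < s /\ forall t', -B <= t' -> t' <= B ->
      t' < s + t -> t < s + t' -> G1 t' s) ->
  exists d, 0 < d /\ forall t, -B <= t -> t <= B -> G1 t d.
Proof.
move=> hB hG mono loc.
pose S t := [/\ -B <= t, t <= B & exists d, 0 < d /\ forall y, -B <= y -> y <= t -> G1 y d].
have hX : Def (fun z : pt M 1 => S (sc z)).
  have hQ : Def (fun w : pt M ((1 + 1) + 1) => -B <= sc (rgtB w) ->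
      sc (rgtB w) <= sc (lftB (lftB w)) -> G1 (sc (rgtB w)) (sc (rgtB (lftB w)))).
    apply: (Def_imp Hexp); first by apply: (Dcle Hexp); coordt.
    apply: (Def_imp Hexp); first by apply: (Dle Hexp); coordt.
    by apply: (Def_pullE Hexp (Phi := fun w => catf (rgtB w) (rgtB (lftB w))) hG); [coordt| move=> w; simpc].
  have hA := Def_all1 Hexp hQ.
  have h0 : Def (fun w : pt M (1 + 1) => 0 < sc (rgtB w)).
    by apply: (Dclt Hexp); coordt.
  have hE := Def_ex1 Hexp (Def_and Hexp h0 hA).
  have h1 : Def (fun z : pt M 1 => -B <= sc z) by apply: (Dcle Hexp); coordt.
  have h2 : Def (fun z : pt M 1 => sc z <= B) by apply: (Dlec Hexp); coordt.
  apply: Def_ext (Def_and Hexp h1 (Def_and Hexp h2 hE)) _ => z.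
  rewrite /S; simps; split; [by case=> [? [? ?]]|by case=> ? ? ?].
have hmB : -B <= B.
  apply: (le_trans (y := 0)); last by [].
  by have := leD HM (- B) hB; rewrite add0r subrr.
have SmB : S (-B).
  have [s [s0 hs]] := loc (-B) (lexx _) hmB.
  split=> //; exists s; split=> // y h1 h2.
  have -> : y = -B by apply: le_anti; rewrite h1 h2.
  apply: hs => //; by have := ltD HM (-B) s0; rewrite add0r.
have [hsup _] := Hdc hX.
have [sig [sub sleast]] : exists sig, is_ub (fun a => S a) sig /\
    forall b, is_ub (fun a => S a) b -> sig <= b.
  apply: hsup; first by exists (-B).
  by exists B => x [].
have sB : sig <= B by apply: sleast => x [].
have Bs : -B <= sig by apply: sub.
have [s [s0 hs]] := loc sig Bs sB.
have [t [St ts]] : exists t, S t /\ sig - s < t.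
  apply: NNPP => hn; have : sig <= sig - s.
    apply: sleast => x Sx; case: (tot HM x (sig - s)) => // h.
    case: (classic (x = sig - s)) => [->//|hne]; exfalso; apply: hn; exists x; split=> //.
    by rewrite lt_neqAle h andbT; apply/eqP => e; apply: hne.
  move=> h; have hlt : sig - s < sig.
    by apply/(lt_subE HM); have := ltDl HM sig s0; rewrite addr0 addrC.
  by have := lt_le_trans hlt h; rewrite ltxx.
have tsig : t <= sig by apply: sub.
case: St => _ _ [d [d0 hd]].
have [d' [d'0 d'd d's]] := pmin d0 s0.
have K : forall t2, -B <= t2 -> t2 <= B -> t2 < s + sig -> S t2.
  move=> t2 h1 h2 h3; split=> //; exists d'; split=> // y hy1 hy2.
  case: (tot HM y t) => hyt; first by apply: (mono _ d) => //; apply: hd.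
  apply: (mono _ s) => //; apply: hs => //.
  - exact: le_trans hy2 h2.
  - exact: le_lt_trans hy2 h3.
  rewrite addrC; apply/(lt_subE HM); exact: lt_le_trans ts hyt.
have : sig = B \/ sig < B by move: sB; rewrite le_eqVlt => /orP[/eqP|]; auto.
case=> [eB|lB].
  have [_ _ [d2 [d20 hd2]]] : S B.
    apply: K => //; rewrite -eB; by have := ltD HM sig s0; rewrite add0r.
  by exists d2; split=> // y h1 h2; apply: hd2.
have Bp : 0 < B - sig by have := ltD HM (- sig) lB; rewrite subrr.
have [m0 [m00 m0s m0B]] := pmin s0 Bp.
have [a [a0 am]] := Hden m00.
have ha : sig < a + sig by have := ltD HM sig a0; rewrite add0r.
have : S (a + sig).
  apply: K.
  - exact: le_trans Bs (ltW ha).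
  - apply: ltW; have := ltD HM sig (lt_le_trans am m0B); by rewrite subrK.
  - apply: ltD => //; exact: lt_le_trans am m0s.
move=> /sub h; by have := lt_le_trans ha h; rewrite ltxx.
Qed.
End Int.



Lemma forall_split k n (P : 'I_(k + n) -> Prop) :
  (forall i, P i) <-> (forall j, P (lshift n j)) /\ (forall j, P (rshift k j)).
Proof.
split=> [h|[h1 h2] i]; first by split=> j; apply: h.
by rewrite -(splitK i); case: (split i) => j /=.
Qed.

Lemma coord_pick (M : porderZmodType) k n (P : pt M k -> pt M n) (i : 'I_n) :
  coord P -> coord (fun z => (fun _ : 'I_1 => P z i)).
Proof. by case=> s hs; exists (fun _ => s i) => z; rewrite hs. Qed.

Section Leb.
Variable M : porderZmodType.
Hypothesis HM : ordered_abelian_group M.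
Variable Def : forall n, (pt M n -> Prop) -> Prop.
Hypothesis Hexp : is_expansion Def.
Hypothesis Hdc : definably_complete Def.
Hypothesis Hden : forall r : M, 0 < r -> exists a, 0 < a /\ a < r.

Definition inbox (B : M) n (y : pt M n) := forall i, -B <= y i /\ y i <= B.

Lemma half (r : M) : 0 < r -> exists h, 0 < h /\ h + h <= r.
Proof.
move=> r0; have [a [a0 ar]] := Hden r0.
have ra : 0 < r - a by have := ltD HM (- a) ar; rewrite subrr.
case: (tot HM a (r - a)) => h.
  by exists a; split=> //; have := leDl HM a h; rewrite [a + (r - a)]addrC subrK.
by exists (r - a); split=> //; have := leD HM (r - a) h; rewrite [a + (r - a)]addrC subrK.
Qed.

Lemma ltd_cat k n (x x' : pt M k) (y y' : pt M n) s :
  ltd (catf x y) (catf x' y') s <-> [/\ 0 < s, (forall i, x i < s + x' i /\ x' i < s + x i)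
     & (forall i, y i < s + y' i /\ y' i < s + y i)].
Proof.
rewrite /ltd forall_split; split.
  by case=> s0 [h1 h2]; split=> // i; [have := h1 i|have := h2 i]; rewrite ?catf_l ?catf_r.
case=> s0 h1 h2; split=> //; split=> i; rewrite ?catf_l ?catf_r; auto.
Qed.

Lemma inbox_cat B k n (x : pt M k) (y : pt M n) :
  inbox B (catf x y) <-> inbox B x /\ inbox B y.
Proof.
rewrite /inbox forall_split; split.
  by case=> h1 h2; split=> i; [have := h1 i|have := h2 i]; rewrite ?catf_l ?catf_r.
by case=> h1 h2; split=> i; rewrite ?catf_l ?catf_r.
Qed.

Lemma Def_inbox B k m (P : pt M k -> pt M m) : coord P -> Def (fun z => inbox B (P z)).
Proof.
move=> hP; apply: (Def_allfin Hexp) => i; apply: (Def_and Hexp).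
  exact: (@Dcle _ _ Hexp _ (-B) _ (coord_pick i hP)).
exact: (@Dlec _ _ Hexp _ B _ (coord_pick i hP)).
Qed.

Lemma Leb m : forall (B : M) (G : pt M m -> M -> Prop), 0 <= B ->
  Def (fun w : pt M (m + 1) => G (lftB w) (sc (rgtB w))) ->
  (forall x r r', 0 < r' -> r' <= r -> G x r -> G x r') ->
  (forall x, inbox B x -> exists s, 0 < s /\ forall y, inbox B y -> ltd x y s -> G y s) ->
  exists d, 0 < d /\ forall x, inbox B x -> G x d.
Proof.
elim: m => [|m IH] B G hB hG mono loc.
  pose x0 : pt M 0 := fun i => 0.
  have [s [s0 hs]] := loc x0 (fun i => match i with Ordinal _ hi => False_ind _ (notF hi) end).
  exists s; split=> // x _.
  have -> : x = x0 by apply: functional_extensionality => -[i hi].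
  apply: hs; first by case.
  by split=> // -[].
pose H (t : M) (y : pt M m) (r : M) := forall t', -B <= t' -> t' <= B -> t' < r + t ->
   t < r + t' -> G (catf (one t') y) r.
have hH : forall t, Def (fun w : pt M (m + 1) => H t (lftB w) (sc (rgtB w))).
  move=> t.
  have hin : Def (fun z : pt M (((m + 1) + 1) + 1) =>
     -B <= sc (rgtB z) -> sc (rgtB z) <= B ->
     sc (rgtB z) < sc (rgtB (lftB (lftB z))) + sc (rgtB (lftB z)) ->
     sc (rgtB (lftB z)) < sc (rgtB (lftB (lftB z))) + sc (rgtB z) ->
     G (catf (rgtB z) (lftB (lftB (lftB z)))) (sc (rgtB (lftB (lftB z))))).
    apply: (Def_imp Hexp); first by apply: (Dcle Hexp); coordt.
    apply: (Def_imp Hexp); first by apply: (Dlec Hexp); coordt.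
    apply: (Def_imp Hexp); first by apply: (Dltsum Hexp); coordt.
    apply: (Def_imp Hexp); first by apply: (Dltsum Hexp); coordt.
    apply: (Def_pullE Hexp (Phi := fun z : pt M (((m + 1) + 1) + 1) =>
       catf (catf (rgtB z) (lftB (lftB (lftB z)))) (rgtB (lftB (lftB z)))) hG).
      by coordt.
    by move=> z; simpc.
  have h2 := Def_subst Hexp t (Def_all1 Hexp hin).
  apply: Def_ext h2 _ => w; rewrite /H; simps; reflexivity.
have hHt : forall t, -B <= t -> t <= B -> exists d, 0 < d /\ forall y, inbox B y -> H t y d.
  move=> t t1 t2; apply: IH => //.
    move=> y r r' r0 rr h t' a1 a2 a3 a4; apply: (mono _ r) => //; apply: h => //.
      exact: lt_le_trans a3 (leD HM t rr).
    exact: lt_le_trans a4 (leD HM t' rr).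
  move=> y hy; have hx : inbox B (catf (one t) y) by apply/(inbox_cat B); split.
  have [s [s0 hs]] := loc _ hx; exists s; split=> // y' hy' hyy' t' a1 a2 a3 a4.
  apply: hs; first exact: (proj2 (inbox_cat B (one t') y') (conj (fun i => conj a1 a2) hy')).
  exact: (proj2 (ltd_cat (one t) (one t') y y' s) (And3 (proj1 hyy') (fun i => conj a4 a3) (proj2 hyy'))).
pose G1 (t r : M) := forall y, inbox B y -> H t y r.
have hG1 : Def (fun w : pt M (1 + 1) => G1 (sc (lftB w)) (sc (rgtB w))).
  have hin : Def (fun z : pt M (((1 + 1) + m) + 1) =>
     inbox B (rgtB (lftB z)) ->
     -B <= sc (rgtB z) -> sc (rgtB z) <= B ->
     sc (rgtB z) < sc (rgtB (lftB (lftB z))) + sc (lftB (lftB (lftB z))) ->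
     sc (lftB (lftB (lftB z))) < sc (rgtB (lftB (lftB z))) + sc (rgtB z) ->
     G (catf (rgtB z) (rgtB (lftB z))) (sc (rgtB (lftB (lftB z))))).
    apply: (Def_imp Hexp); first by apply: (Def_inbox); coordt.
    apply: (Def_imp Hexp); first by apply: (Dcle Hexp); coordt.
    apply: (Def_imp Hexp); first by apply: (Dlec Hexp); coordt.
    apply: (Def_imp Hexp); first by apply: (Dltsum Hexp); coordt.
    apply: (Def_imp Hexp); first by apply: (Dltsum Hexp); coordt.
    apply: (Def_pullE Hexp (Phi := fun z : pt M (((1 + 1) + m) + 1) =>
       catf (catf (rgtB z) (rgtB (lftB z))) (rgtB (lftB (lftB z)))) hG).
      by coordt.
    by move=> z; simpc.
  have h2 := Def_allB Hexp (Def_all1 Hexp hin).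
  apply: Def_ext h2 _ => w; rewrite /G1 /H; simps.
  by split=> h y hy *; apply: h.
have [d [d0 hd]] : exists d, 0 < d /\ forall t, -B <= t -> t <= B -> G1 t d.
  apply: (Int HM Hexp Hdc Hden hB hG1).
    move=> t r r' r0 rr h y hy t' a1 a2 a3 a4; apply: (mono _ r) => //; apply: (h y hy) => //.
      exact: lt_le_trans a3 (leD HM t rr).
    exact: lt_le_trans a4 (leD HM t' rr).
  move=> t t1 t2; have [dt [dt0 hdt]] := hHt t t1 t2.
  have [h [h0 hh]] := half dt0.
  exists h; split=> // t1' b1 b2 b3 b4 y hy t' a1 a2 a3 a4.
  have hdt' : h <= dt.
    apply: ltW; apply: (lt_le_trans _ hh); by have := ltDl HM h h0; rewrite addr0.
  apply: (mono _ dt) => //; apply: (hdt y hy) => //.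
  - have := lt_trans a3 (ltDl HM h b3); rewrite addrA => e; exact: lt_le_trans e (leD HM t hh).
  - have := lt_trans b4 (ltDl HM h a4); rewrite addrA => e; exact: lt_le_trans e (leD HM t' hh).
exists d; split=> // x hx.
have E : catf (one (sc (@lftB M 1 m x))) (@rgtB M 1 m x) = x by rewrite one_sc cat_lr.
rewrite -E in hx; have [hx1 hx2] := proj1 (@inbox_cat B 1 m _ _) hx.
rewrite -E; apply: (hd _ (proj1 (hx1 ord0)) (proj2 (hx1 ord0)) _ hx2) => //.
  exact: (proj1 (hx1 ord0)). exact: (proj2 (hx1 ord0)).
all: by have := ltD HM (sc (@lftB M 1 m x)) d0; rewrite add0r.
Qed.
End Leb.



Section Fin.
Variable M : porderZmodType.
Hypothesis HM : ordered_abelian_group M.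
Variable Def : forall n, (pt M n -> Prop) -> Prop.
Hypothesis Hexp : is_expansion Def.

Lemma Dltsumc k (P1 P2 : pt M k -> pt M 1) c : coord P1 -> coord P2 ->
  Def (fun z => sc (P1 z) < c + sc (P2 z)).
Proof.
move=> h1 h2.
have h : Def (fun w : pt M (k + 1) => sc (P1 (lftB w)) < sc (rgtB w) + sc (P2 (lftB w))).
  apply: (Dltsum Hexp); [case: h1 => s hs|exact: coord_rgtB0|case: h2 => s hs];
  by exists (fun i => lshift 1 (s i)) => z; rewrite hs.
by apply: Def_ext (Def_subst Hexp c h) _ => z; simpc.
Qed.

Lemma Def_ltd k m (P1 P2 : pt M k -> pt M m) (P3 : pt M k -> pt M 1) :
  coord P1 -> coord P2 -> coord P3 -> Def (fun z => ltd (P1 z) (P2 z) (sc (P3 z))).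
Proof.
move=> h1 h2 h3; apply: (Def_and Hexp); first exact: (@Dclt _ _ Hexp _ 0 _ h3).
apply: (Def_allfin Hexp) => i; apply: (Def_and Hexp).
  exact: (Dltsum Hexp (coord_pick i h1) h3 (coord_pick i h2)).
exact: (Dltsum Hexp (coord_pick i h2) h3 (coord_pick i h1)).
Qed.

Lemma le_absM (a : M) : a <= absM a /\ - a <= absM a.
Proof.
rewrite /absM /Order.max; case: ifP => h; first by split=> //; apply: ltW.
split=> //; case: (tot HM a (- a)) => // h2.
by move: h2; rewrite le_eqVlt h orbF => /eqP <-.
Qed.

Lemma absM_le_nrm n (x : pt M n) i : absM (x i) <= nrm x.
Proof.
case: (tot HM (absM (x i)) (nrm x)) => // h.
case: (classic (nrm x = absM (x i))) => [->//|hne]; exfalso.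
have : nrm x < absM (x i) by rewrite lt_neqAle h andbT; apply/eqP.
by move/(nrm_lt HM) => [_ /(_ i)]; rewrite ltxx.
Qed.

Lemma ltd_mono n (x y : pt M n) r r' : r <= r' -> ltd x y r -> ltd x y r'.
Proof.
move=> rr [r0 h]; split; first exact: lt_le_trans r0 rr.
by move=> i; have [h1 h2] := h i; split; apply: lt_le_trans (leD HM _ rr).
Qed.

Lemma ltd_tri n (x y z : pt M n) r s : ltd x y r -> ltd y z s -> ltd x z (r + s).
Proof.
move=> [r0 h] [s0 h']; split; first by have := ltD2 HM r0 s0; rewrite addr0.
move=> i; have [a1 a2] := h i; have [b1 b2] := h' i; split.
  by have := lt_trans a1 (ltDl HM r b1); rewrite addrA.
by have := lt_trans b2 (ltDl HM s a2); rewrite addrA [s + r]addrC.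
Qed.
End Fin.

Theorem mainTheorem5 (M : porderZmodType) (HM : ordered_abelian_group M)
  (Def : forall n, (pt M n -> Prop) -> Prop)
  (Hexp : is_expansion Def) (Hdc : definably_complete Def)
  (Hlom : locally_o_minimal Def)
  (m n : nat) (C : pt M m -> Prop) (P : pt M n -> Prop)
  (HC : Def m C) (HP : Def n P) (HCcl : closed_set C) (HCbd : bounded_set C)
  (f : pt M m -> pt M n -> M) (Hf : definable_fun Def C P f) :
  equicontinuous C P f <-> unif_equicontinuous C P f.
Proof.
split; last first.
  move=> hu e e0 x Cx; have [d [d0 hd]] := hu e e0.
  by exists d; split=> // p x' Pp Cx'; apply: hd.
move=> heq e e0.
case: (classic (exists r : M, 0 < r /\ forall a, ~ (0 < a /\ a < r))) => [[r [r0 hr]] | hnd].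
  exists r; split=> // p x x' Pp Cx Cx' /(dist_lt HM) [_ hxx].
  have -> : x' = x.
    apply: functional_extensionality => i; have [h1 h2] := hxx i.
    have nl : forall a b : M, a < r + b -> ~ (b < a).
      move=> a b hab hba; apply: (hr (a - b)); split.
        by have := ltD HM (- b) hba; rewrite subrr.
      by apply/(lt_subE HM).
    case: (tot HM (x' i) (x i)) => h.
      case: (classic (x' i = x i)) => // hne; exfalso; apply: (nl (x i) (x' i) h1).
      by rewrite lt_neqAle h andbT; apply/eqP.
    case: (classic (x' i = x i)) => // hne; exfalso; apply: (nl (x' i) (x i) h2).
    by rewrite lt_neqAle h andbT; apply/eqP => e'; apply: hne.
  by rewrite subrr /absM oppr0 /Order.max ltxx.
have Hden : forall r : M, 0 < r -> exists a, 0 < a /\ a < r.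
  move=> r r0; apply: NNPP => h; apply: hnd; exists r; split=> // a ha; apply: h; by exists a.
pose F x p u := C x /\ P p /\ u = f x p.
have hF : Def _ (fun z : pt M ((m + n) + 1) => F (lftB (lftB z)) (rgtB (lftB z)) (sc (rgtB z))).
  apply: Def_ext Hf _ => z; rewrite /F; split.
    by move=> [x [p [Cx [Pp ->]]]]; simpc.
  move=> [Cx [Pp hu]]; exists (lftB (lftB z)), (rgtB (lftB z)); split=> //; split=> //.
  by rewrite -hu -[fun _ => _]/(one (sc (rgtB z))) one_sc !cat_lr.
pose G x r := C x -> forall p, P p -> forall x', C x' -> ltd x x' r ->
   forall u v, F x p u -> F x' p v -> u < e + v /\ v < e + u.
have hG : Def _ (fun w : pt M (m + 1) => G (lftB w) (sc (rgtB w))).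
  have hQ : Def _ (fun z : pt M (((((m + 1) + n) + m) + 1) + 1) =>
    C (lftB (lftB (lftB (lftB (lftB z))))) -> P (rgtB (lftB (lftB (lftB z)))) ->
    C (rgtB (lftB (lftB z))) ->
    ltd (lftB (lftB (lftB (lftB (lftB z))))) (rgtB (lftB (lftB z))) (sc (rgtB (lftB (lftB (lftB (lftB z)))))) ->
    F (lftB (lftB (lftB (lftB (lftB z))))) (rgtB (lftB (lftB (lftB z)))) (sc (rgtB (lftB z))) ->
    F (rgtB (lftB (lftB z))) (rgtB (lftB (lftB (lftB z)))) (sc (rgtB z)) ->
    sc (rgtB (lftB z)) < e + sc (rgtB z) /\ sc (rgtB z) < e + sc (rgtB (lftB z))).
    apply: (Def_imp Hexp).
      by apply: (Def_pullE Hexp (Phi := fun z : pt M (((((m + 1) + n) + m) + 1) + 1) =>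
          lftB (lftB (lftB (lftB (lftB z))))) HC); [coordt | move=> z; tauto].
    apply: (Def_imp Hexp).
      by apply: (Def_pullE Hexp (Phi := fun z : pt M (((((m + 1) + n) + m) + 1) + 1) =>
          rgtB (lftB (lftB (lftB z)))) HP); [coordt | move=> z; tauto].
    apply: (Def_imp Hexp).
      by apply: (Def_pullE Hexp (Phi := fun z : pt M (((((m + 1) + n) + m) + 1) + 1) =>
          rgtB (lftB (lftB z))) HC); [coordt | move=> z; tauto].
    apply: (Def_imp Hexp).
      apply: (Def_ltd Hexp (P1 := fun z : pt M (((((m + 1) + n) + m) + 1) + 1) => lftB (lftB (lftB (lftB (lftB z)))))
        (P2 := fun z : pt M (((((m + 1) + n) + m) + 1) + 1) => rgtB (lftB (lftB z)))
        (P3 := fun z : pt M (((((m + 1) + n) + m) + 1) + 1) => rgtB (lftB (lftB (lftB (lftB z)))))); by coordt.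
    apply: (Def_imp Hexp).
      by apply: (Def_pullE Hexp (Phi := fun z : pt M (((((m + 1) + n) + m) + 1) + 1) =>
          catf (catf (lftB (lftB (lftB (lftB (lftB z))))) (rgtB (lftB (lftB (lftB z))))) (rgtB (lftB z))) hF);
        [coordt | move=> z; simpc; tauto].
    apply: (Def_imp Hexp).
      by apply: (Def_pullE Hexp (Phi := fun z : pt M (((((m + 1) + n) + m) + 1) + 1) =>
          catf (catf (rgtB (lftB (lftB z))) (rgtB (lftB (lftB (lftB z))))) (rgtB z)) hF);
        [coordt | move=> z; simpc; tauto].
    by apply: (Def_and Hexp); apply: (Dltsumc Hexp); coordt.
  have h2 := Def_allB Hexp (Def_allB Hexp (Def_all1 Hexp (Def_all1 Hexp hQ))).
  apply: Def_ext h2 _ => w; rewrite /G; simps.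
  split=> h.
    by move=> Cx p Pp x' Cx' hl u v hu hv; apply: (h p x' u v).
  by move=> p x' u v Cx Pp Cx' hl hu hv; apply: (h Cx p Pp x' Cx' hl u v).
have [B [B0 hB]] : exists B : M, 0 <= B /\ forall x, C x -> inbox B x.
  case: HCbd => B hB.
  have [B' [B'0 BB']] : exists B' : M, 0 <= B' /\ B <= B'.
    by case: (tot HM 0 B) => h; [exists B | exists 0].
  exists B'; split=> // x Cx i.
  have h1 := le_trans (absM_le_nrm HM x i) (le_trans (hB x Cx) BB').
  have [h2 h3] := le_absM HM (x i).
  split; last exact: le_trans h2 h1.
  have h4 := le_trans h3 h1.
  by have := leD HM (x i - B') h4; rewrite addKr addrC subrK.
have [e' [e'0 ee']] := half HM Hden e0.
have [d [d0 hd]] : exists d, 0 < d /\ forall x, inbox B x -> G x d.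
  apply: (Leb HM Hexp Hdc Hden B0 hG).
    move=> x r r' r0 rr h Cx p Pp x' Cx' hl; exact: (h Cx p Pp x' Cx' (ltd_mono HM rr hl)).
  move=> x hx; case: (classic (C x)) => Cx.
    have [r0 [r00 hr]] := heq e' e'0 x Cx.
    have [s [s0 ss]] := half HM Hden r00.
    have sr0 : s <= r0.
      apply: ltW; apply: (lt_le_trans _ ss); by have := ltD HM s s0; rewrite add0r.
    exists s; split=> // y hy hxy Cy p Pp x' Cx' hyx' u v [_ [_ ->]] [_ [_ ->]].
    have E1 := hr p y Pp Cy (proj2 (dist_lt HM _ _ _) (ltd_mono HM sr0 hxy)).
    have E2 := hr p x' Pp Cx' (proj2 (dist_lt HM _ _ _) (ltd_mono HM ss (ltd_tri HM hxy hyx'))).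
    move/(absM_lt HM): E1; rewrite opprB !(lt_subE HM) => -[a1 a2].
    move/(absM_lt HM): E2; rewrite opprB !(lt_subE HM) => -[b1 b2].
    split.
      have := lt_trans a2 (ltDl HM e' b1); rewrite addrA => h; exact: lt_le_trans h (leD HM _ ee').
    have := lt_trans b2 (ltDl HM e' a1); rewrite addrA => h; exact: lt_le_trans h (leD HM _ ee').
  have [e1 [e10 hno]] : exists e1 : M, 0 < e1 /\ forall y, C y -> ~ dist x y < e1.
    apply: NNPP => hn; apply: Cx; apply: HCcl => e1 e10; apply: NNPP => hn2; apply: hn.
    by exists e1; split=> // y Cy hd; apply: hn2; exists y.
  exists e1; split=> // y hy hxy Cy; exfalso; apply: (hno y Cy); exact/(dist_lt HM).
exists d; split=> // p x x' Pp Cx Cx' /(dist_lt HM) hl.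
have [h1 h2] := hd x (hB x Cx) Cx p Pp x' Cx' hl (f x p) (f x' p) (conj Cx (conj Pp erefl))
   (conj Cx' (conj Pp erefl)).
by apply/(absM_lt HM); rewrite opprB !(lt_subE HM).
Qed.
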